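(* Let $A=k[x,y]$, graded by $|x|=|y|=1$. The algebra map $\delta_A:A\to\mathcal{O}_{nc}(\mathrm{GL}_2)\otimes A$ with $\delta_A(x)=a\otimes x+b\otimes y$, $\delta_A(y)=c\otimes x+d\otimes y$ makes $A$ a graded $\mathcal{O}_{nc}(\mathrm{GL}_2)$-comodule algebra, and $(\mathcal{O}_{nc}(\mathrm{GL}_2),\delta_A)$ is the universal coacting Hopf algebra of $A$: for every Hopf algebra $H$ and every algebra map $f:A\to H\otimes A$ making $A$ an $H$-comodule algebra with $f(A_n)\subset H\otimes A_n$ for all $n$, there is a unique Hopf algebra morphism $g:\mathcal{O}_{nc}(\mathrm{GL}_2)\to H$ with $(g\otimes1)\circ\delta_A=f$. (Equivalently $\mathcal{O}_{nc}(\mathrm{GL}_2)$ is the Hopf envelope of Manin's bialgebra $k\langle a,b,c,d\rangle/(ac-ca,\,bd-db,\,ad-cb-da+bc)$.)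
   Context: $k$ a field. $\mathcal{O}_{nc}(\mathrm{GL}_2)$ is the $k$-algebra generated by $a,b,c,d,\delta,\delta^{-1}$ with relations $ac=ca$, $bd=db$, $ad-cb=\delta=da-bc$, $\delta\delta^{-1}=1=\delta^{-1}\delta$, $a\delta^{-1}d-b\delta^{-1}c=1=d\delta^{-1}a-c\delta^{-1}b$, $b\delta^{-1}a=a\delta^{-1}b$, $c\delta^{-1}d=d\delta^{-1}c$, with Hopf structure $\Delta(a)=a\otimes a+b\otimes c$, $\Delta(b)=a\otimes b+b\otimes d$, $\Delta(c)=c\otimes a+d\otimes c$, $\Delta(d)=c\otimes b+d\otimes d$, $\Delta(\delta^{\pm1})=\delta^{\pm1}\otimes\delta^{\pm1}$, $\epsilon(a)=\epsilon(d)=\epsilon(\delta^{\pm1})=1$, $\epsilon(b)=\epsilon(c)=0$, antipode $S(a)=\delta^{-1}d$, $S(b)=-\delta^{-1}b$, $S(c)=-\delta^{-1}c$, $S(d)=\delta^{-1}a$, $S(\delta^{\pm1})=\delta^{\mp1}$. An $H$-comodule algebra is an algebra $A$ with an algebra map $A\to H\otimes A$ that is a left $H$-comodule structure. *)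

(* Defs.v *)
From HB Require Import structures.
From mathcomp Require Import all_boot all_algebra.
From mathcomp Require Import mpoly.
From Stdlib Require Import ClassicalEpsilon.

Set Implicit Arguments.
Unset Strict Implicit.
Unset Printing Implicit Defensive.

Import GRing.Theory.
Local Open Scope ring_scope.

Section HopfDefs.
Variable k : fieldType.

Definition lin (V U : lmodType k) (l : V -> U) : Prop :=
  forall (a : k) (x y : V), l (a *: x + y) = a *: l x + l y.

Definition bilin (V W U : lmodType k) (b : V -> W -> U) : Prop :=
  (forall w, lin (fun v => b v w)) /\ (forall v, lin (b v)).

Definition trilin (V1 V2 V3 U : lmodType k) (t : V1 -> V2 -> V3 -> U) : Prop :=
  [/\ forall y z, lin (fun x => t x y z),
      forall x z, lin (fun y => t x y z) &
      forall x y, lin (t x y)].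

Record tensor (V W : lmodType k) := Tensor {
  tcar :> lmodType k;
  tmul : V -> W -> tcar;
  tmul_bilin : bilin tmul;
  tmul_univ : forall (U : lmodType k) (b : V -> W -> U), bilin b ->
    exists l : tcar -> U, lin l /\ forall v w, l (tmul v w) = b v w;
  tmul_uniq : forall (U : lmodType k) (l1 l2 : tcar -> U), lin l1 -> lin l2 ->
    (forall v w, l1 (tmul v w) = l2 (tmul v w)) -> forall t, l1 t = l2 t }.

Record atensor (V W : algType k) := ATensor {
  acar :> algType k;
  amul : V -> W -> acar;
  amul_bilin : bilin amul;
  amul_univ : forall (U : lmodType k) (b : V -> W -> U), bilin b ->
    exists l : acar -> U, lin l /\ forall v w, l (amul v w) = b v w;
  amul_uniq : forall (U : lmodType k) (l1 l2 : acar -> U), lin l1 -> lin l2 ->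
    (forall v w, l1 (amul v w) = l2 (amul v w)) -> forall t, l1 t = l2 t;
  amulM : forall v v' w w', amul (v * v') (w * w') = amul v w * amul v' w';
  amul1 : amul 1 1 = 1 }.

Definition atensor_tensor (V W : algType k) (X : atensor V W) : tensor V W :=
  @Tensor V W (acar X) (@amul V W X) (amul_bilin X) (@amul_univ V W X) (@amul_uniq V W X).
Coercion atensor_tensor : atensor >-> tensor.

Record tensor3 (V1 V2 V3 : lmodType k) := Tensor3 {
  t3car :> lmodType k;
  tmul3 : V1 -> V2 -> V3 -> t3car;
  tmul3_trilin : trilin tmul3;
  tmul3_univ : forall (U : lmodType k) (t : V1 -> V2 -> V3 -> U), trilin t ->
    exists l : t3car -> U, lin l /\ forall x y z, l (tmul3 x y z) = t x y z;
  tmul3_uniq : forall (U : lmodType k) (l1 l2 : t3car -> U), lin l1 -> lin l2 ->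
    (forall x y z, l1 (tmul3 x y z) = l2 (tmul3 x y z)) -> forall t, l1 t = l2 t }.

(* the linear map V ⊗ W -> U induced by a bilinear map b (chosen by the
   universal property; junk if b is not bilinear) *)
Definition tlift (V W : lmodType k) (T : tensor V W) (U : lmodType k)
  (b : V -> W -> U) : T -> U :=
  epsilon (inhabits (fun _ : T => (0 : U)))
    (fun l : T -> U => lin l /\ forall v w, l (tmul T v w) = b v w).

Arguments tlift {V W} T {U} b _.

Definition tmap (V W V' W' : lmodType k) (T1 : tensor V W) (T2 : tensor V' W')
  (f : V -> V') (g : W -> W') : T1 -> T2 :=
  tlift T1 (fun v w => tmul T2 (f v) (g w)).

Arguments tmap {V W V' W'} T1 T2 f g _.

(* (D ⊗ 1) : V ⊗ W -> V ⊗ V ⊗ W *)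
Definition coL (V W : lmodType k) (T : tensor V W) (T12 : tensor V V)
  (T3 : tensor3 V V W) (D : V -> T12) : T -> T3 :=
  tlift T (fun v w => tlift T12 (fun u u' => tmul3 T3 u u' w) (D v)).

(* (1 ⊗ f) : V ⊗ W -> V ⊗ V ⊗ W, for f : W -> V ⊗ W *)
Definition coR (V W : lmodType k) (T : tensor V W) (T3 : tensor3 V V W)
  (f : W -> T) : T -> T3 :=
  tlift T (fun v w => tlift T (fun u w' => tmul3 T3 v u w') (f w)).

Arguments coL {V W} T T12 T3 D _.
Arguments coR {V W} T T3 f _.

Definition alg_map (R S : algType k) (f : R -> S) : Prop :=
  [/\ lin f, forall x y, f (x * y) = f x * f y & f 1 = 1].

Record hopf := Hopf {
  hcar :> algType k;
  hHH : atensor hcar hcar;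
  hHHH : tensor3 hcar hcar hcar;
  comul : hcar -> hHH;
  counit : hcar -> k;
  antipode : hcar -> hcar;
  comul_alg : alg_map comul;
  counit_lin : forall (a : k) (x y : hcar), counit (a *: x + y) = a * counit x + counit y;
  counitM : forall x y, counit (x * y) = counit x * counit y;
  counit1 : counit 1 = 1;
  comul_coassoc : forall h,
    coL hHH hHH hHHH comul (comul h) = coR hHH hHHH comul (comul h);
  counitL : forall h, tlift hHH (fun u v => counit u *: v) (comul h) = h;
  counitR : forall h, tlift hHH (fun u v => counit v *: u) (comul h) = h;
  antipode_lin : lin antipode;
  antipodeL : forall h, tlift hHH (fun u v => antipode u * v) (comul h) = (counit h)%:A;
  antipodeR : forall h, tlift hHH (fun u v => u * antipode v) (comul h) = (counit h)%:A }.

Definition hopf_morph (H1 H2 : hopf) (g : H1 -> H2) : Prop :=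
  [/\ alg_map g,
      forall h, comul (g h) = tmap (hHH H1) (hHH H2) g g (comul h),
      forall h, counit (g h) = counit h &
      forall h, antipode (g h) = g (antipode h)].

Definition comod_alg (H : hopf) (A : algType k) (HA : atensor H A)
  (HHA : tensor3 H H A) (f : A -> HA) : Prop :=
  [/\ alg_map f,
      forall x, coL HA (hHH H) HHA (@comul H) (f x) = coR HA HHA f (f x) &
      forall x, tlift HA (fun h y => counit h *: y) (f x) = x].

Definition Apoly := {mpoly k[2]}.
Definition xA : Apoly := 'X_(@Ordinal 2 0 isT).
Definition yA : Apoly := 'X_(@Ordinal 2 1 isT).

Definition graded_coaction (H : algType k) (HA : atensor H Apoly) (f : Apoly -> HA) : Prop :=
  forall (n : nat) (p : Apoly), p \is n.-homog ->
    exists s : seq (H * Apoly),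
      all (fun hp => hp.2 \is n.-homog) s /\ f p = \sum_(hp <- s) amul HA hp.1 hp.2.

Definition onc_rel (R : algType k) (a b c d e e' : R) : Prop :=
  [/\ a * c = c * a /\ b * d = d * b,
      a * d - c * b = e /\ d * a - b * c = e,
      e * e' = 1 /\ e' * e = 1,
      a * e' * d - b * e' * c = 1 /\ d * e' * a - c * e' * b = 1 &
      b * e' * a = a * e' * b /\ c * e' * d = d * e' * c].

Definition presents (O : algType k) (a b c d e e' : O) : Prop :=
  onc_rel a b c d e e' /\
  forall (R : algType k) (a1 b1 c1 d1 e1 e1' : R), onc_rel a1 b1 c1 d1 e1 e1' ->
    (exists phi : O -> R, alg_map phi /\
        [/\ phi a = a1, phi b = b1, phi c = c1, phi d = d1 & phi e = e1 /\ phi e' = e1']) /\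
    (forall phi1 phi2 : O -> R, alg_map phi1 -> alg_map phi2 ->
        [/\ phi1 a = phi2 a, phi1 b = phi2 b, phi1 c = phi2 c, phi1 d = phi2 d &
            phi1 e = phi2 e /\ phi1 e' = phi2 e'] ->
        forall o, phi1 o = phi2 o).

Definition onc_hopf_data (O : hopf) (a b c d e e' : O) : Prop :=
  let t := amul (hHH O) in
  [/\ [/\ comul a = t a a + t b c, comul b = t a b + t b d,
          comul c = t c a + t d c, comul d = t c b + t d d
          & comul e = t e e /\ comul e' = t e' e'],
      [/\ counit a = 1, counit d = 1, counit e = 1, counit e' = 1 &
          counit b = 0 /\ counit c = 0] &
      [/\ antipode a = e' * d, antipode b = - (e' * b), antipode c = - (e' * c),
          antipode d = e' * a & antipode e = e' /\ antipode e' = e]].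

End HopfDefs.

Arguments tlift {k V W} T {U} b _.
Arguments tmap {k V W V' W'} T1 T2 f g _.
Arguments coL {k V W} T T12 T3 D _.
Arguments coR {k V W} T T3 f _.

(* Main.v *)
Require Import Defs.
From HB Require Import structures.
From mathcomp Require Import all_boot all_algebra.
From mathcomp Require Import mpoly.
From mathcomp Require Import ssrcomplements.
From Stdlib Require Import ClassicalEpsilon.
Set Implicit Arguments.
Unset Strict Implicit.
Unset Printing Implicit Defensive.
Import GRing.Theory.
Local Open Scope ring_scope.

Section Lin.
Variable k : fieldType.

Section L.
Variables (V U : lmodType k) (l : V -> U) (Hl : lin l).
Lemma lin0 : l 0 = 0.
Proof. have := Hl (-1) 0 0. by rewrite scaler0 addr0 scaleN1r addNr. Qed.
Lemma linD x y : l (x + y) = l x + l y.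
Proof. by have := Hl 1 x y; rewrite !scale1r. Qed.
Lemma linZ a x : l (a *: x) = a *: l x.
Proof. by have := Hl a x 0; rewrite !addr0 lin0 addr0. Qed.
Lemma linN x : l (- x) = - l x.
Proof. by rewrite -scaleN1r linZ scaleN1r. Qed.
Lemma linB x y : l (x - y) = l x - l y.
Proof. by rewrite linD linN. Qed.
Lemma lin_sum I (r : seq I) (P : pred I) (F : I -> V) :
  l (\sum_(i <- r | P i) F i) = \sum_(i <- r | P i) l (F i).
Proof. exact: (big_morph l linD lin0). Qed.
End L.

Lemma lin_comp (V W U : lmodType k) (f : V -> W) (g : W -> U) :
  lin f -> lin g -> lin (fun x => g (f x)).
Proof. by move=> Hf Hg a x y; rewrite Hf Hg. Qed.

Lemma lin_id (V : lmodType k) : lin (fun x : V => x).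
Proof. by []. Qed.

Section T.
Variables (V W : lmodType k) (T : tensor V W).

Lemma tmul_lin_l w : lin (fun v => tmul T v w). Proof. by case: (tmul_bilin T). Qed.
Lemma tmul_lin_r v : lin (tmul T v). Proof. by case: (tmul_bilin T). Qed.
Lemma tmulDl v v' w : tmul T (v + v') w = tmul T v w + tmul T v' w.
Proof. exact: (linD (tmul_lin_l w)). Qed.
Lemma tmulDr v w w' : tmul T v (w + w') = tmul T v w + tmul T v w'.
Proof. exact: (linD (tmul_lin_r v)). Qed.
Lemma tmulZl a v w : tmul T (a *: v) w = a *: tmul T v w.
Proof. exact: (linZ (tmul_lin_l w)). Qed.
Lemma tmulZr a v w : tmul T v (a *: w) = a *: tmul T v w.
Proof. exact: (linZ (tmul_lin_r v)). Qed.
Lemma tmulNl v w : tmul T (- v) w = - tmul T v w.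
Proof. exact: (linN (tmul_lin_l w)). Qed.
Lemma tmulNr v w : tmul T v (- w) = - tmul T v w.
Proof. exact: (linN (tmul_lin_r v)). Qed.
Lemma tmulBl v v' w : tmul T (v - v') w = tmul T v w - tmul T v' w.
Proof. exact: (linB (tmul_lin_l w)). Qed.
Lemma tmulBr v w w' : tmul T v (w - w') = tmul T v w - tmul T v w'.
Proof. exact: (linB (tmul_lin_r v)). Qed.
Lemma tmul0l w : tmul T 0 w = 0. Proof. exact: (lin0 (tmul_lin_l w)). Qed.
Lemma tmul0r v : tmul T v 0 = 0. Proof. exact: (lin0 (tmul_lin_r v)). Qed.

Lemma tlift_spec (U : lmodType k) (b : V -> W -> U) : bilin b ->
  lin (tlift T b) /\ forall v w, tlift T b (tmul T v w) = b v w.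
Proof.
move=> Hb; rewrite /tlift; apply epsilon_spec.
by have [l Hl] := tmul_univ T Hb; exists l.
Qed.
Lemma tlift_lin (U : lmodType k) (b : V -> W -> U) : bilin b -> lin (tlift T b).
Proof. by case/tlift_spec. Qed.
Lemma tliftE (U : lmodType k) (b : V -> W -> U) : bilin b ->
  forall v w, tlift T b (tmul T v w) = b v w.
Proof. by case/tlift_spec. Qed.
Lemma tlift_uniq (U : lmodType k) (b : V -> W -> U) (l : T -> U) : bilin b -> lin l ->
  (forall v w, l (tmul T v w) = b v w) -> forall t, l t = tlift T b t.
Proof.
move=> Hb Hl Hlb t; have := @tmul_uniq _ _ _ T U l (tlift T b) Hl (tlift_lin Hb).
by apply=> v w; rewrite Hlb tliftE.
Qed.
Lemma tensor_ext (U : lmodType k) (l1 l2 : T -> U) : lin l1 -> lin l2 ->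
  (forall v w, l1 (tmul T v w) = l2 (tmul T v w)) -> forall t, l1 t = l2 t.
Proof. exact: tmul_uniq. Qed.
End T.

Definition tlift3 (V1 V2 V3 : lmodType k) (T : tensor3 V1 V2 V3) (U : lmodType k)
  (t : V1 -> V2 -> V3 -> U) : T -> U :=
  epsilon (inhabits (fun _ : T => (0 : U)))
    (fun l : T -> U => lin l /\ forall x y z, l (tmul3 T x y z) = t x y z).

Arguments tlift3 {V1 V2 V3} T {U} t _.
Section T3.
Variables (V1 V2 V3 : lmodType k) (T : tensor3 V1 V2 V3).
Lemma tlift3_spec (U : lmodType k) (t : V1 -> V2 -> V3 -> U) : trilin t ->
  lin (tlift3 T t) /\ forall x y z, tlift3 T t (tmul3 T x y z) = t x y z.
Proof.
move=> Ht; rewrite /tlift3; apply epsilon_spec.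
by have [l Hl] := tmul3_univ T Ht; exists l.
Qed.
Lemma tlift3_lin (U : lmodType k) (t : V1 -> V2 -> V3 -> U) : trilin t -> lin (tlift3 T t).
Proof. by case/tlift3_spec. Qed.
Lemma tlift3E (U : lmodType k) (t : V1 -> V2 -> V3 -> U) : trilin t ->
  forall x y z, tlift3 T t (tmul3 T x y z) = t x y z.
Proof. by case/tlift3_spec. Qed.
Lemma tmul3_lin1 y z : lin (fun x => tmul3 T x y z). Proof. by case: (tmul3_trilin T). Qed.
Lemma tmul3_lin2 x z : lin (fun y => tmul3 T x y z). Proof. by case: (tmul3_trilin T). Qed.
Lemma tmul3_lin3 x y : lin (tmul3 T x y). Proof. by case: (tmul3_trilin T). Qed.
End T3.
End Lin.
Arguments tlift3 {k V1 V2 V3} T {U} t _.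
Arguments tlift_lin {k V W} T {U b} _.
Arguments tliftE {k V W} T {U b} _ v w.
Arguments tlift_spec {k V W} T {U b} _.
Arguments tlift_uniq {k V W} T {U b l} _ _ _ t.
Arguments tensor_ext {k V W} T {U l1 l2} _ _ _ t.
Arguments tlift3_lin {k V1 V2 V3} T {U t} _.
Arguments tlift3E {k V1 V2 V3} T {U t} _ x y z.

Definition i0 : 'I_2 := @Ordinal 2 0 isT.
Definition i1 : 'I_2 := @Ordinal 2 1 isT.

Lemma big2 (R : Type) (idx : R) (op : Monoid.law idx) (F : 'I_2 -> R) :
  \big[op/idx]_(i < 2) F i = op (F i0) (F i1).
Proof.
rewrite big_ord_recl big_ord_recl big_ord0 Monoid.mulm1.
by congr (op (F _) (F _)); apply: val_inj.
Qed.

Lemma Xm2 (R : nzRingType) (m : 'X_{1..2}) :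
  'X_[m] = 'X_i0 ^+ m i0 * 'X_i1 ^+ m i1 :> {mpoly R[2]}.
Proof. by rewrite mpolyXE_id big2. Qed.

Lemma mdeg2 (m : 'X_{1..2}) : mdeg m = (m i0 + m i1)%N.
Proof. by rewrite mdegE big2. Qed.

Section AlgMpoly.
Variable k : fieldType.

Lemma alg_mapX (R S : algType k) (F : R -> S) : alg_map F -> forall x n, F (x ^+ n) = F x ^+ n.
Proof. case=> _ HM H1 x; elim=> [|n IH]; by rewrite ?expr0 ?H1 // !exprS HM IH. Qed.

Lemma alg_map_expand (S : algType k) (F : Apoly k -> S) : alg_map F ->
  forall p, F p = \sum_(m <- msupp p) p@_m *: (F (xA k) ^+ m i0 * F (yA k) ^+ m i1).
Proof.
move=> HF p; have [Hl HM H1] := HF.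
rewrite {1}(mpolyE p) (lin_sum Hl); apply: eq_bigr => m _.
by rewrite (linZ Hl) Xm2 HM !(alg_mapX HF).
Qed.

Lemma alg_map_uniq (S : algType k) (F G : Apoly k -> S) : alg_map F -> alg_map G ->
  F (xA k) = G (xA k) -> F (yA k) = G (yA k) -> forall p, F p = G p.
Proof.
move=> HF HG Hx Hy p; rewrite (alg_map_expand HF) (alg_map_expand HG) Hx Hy //.
Qed.

Lemma alg_map_exists (S : algType k) (u v : S) : u * v = v * u ->
  exists F : Apoly k -> S, [/\ alg_map F, F (xA k) = u & F (yA k) = v].
Proof.
move=> uv.
pose h := fun i : 'I_2 => if val i == 0%N then u else v.
pose F := mmap (GRing.in_alg S) h.
have FZ a p : F (a *: p) = a *: F p by rewrite /F mmapZ /= mulr_algl.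
have Fl : lin F by move=> a x y; rewrite /F mmapD -/F FZ.
have FX m : F 'X_[m] = u ^+ m i0 * v ^+ m i1 by rewrite /F mmapX /mmap1 big2.
have FXM m m' : F ('X_[m] * 'X_[m']) = F 'X_[m] * F 'X_[m'].
  rewrite -mpolyXD !FX !mnmDE !exprD -!mulrA; congr (_ * _).
  rewrite !mulrA; congr (_ * _).
  apply: commrX; apply/esym; apply: commrX; exact: (esym uv).
have FXq m q : F ('X_[m] * q) = F 'X_[m] * F q.
  rewrite {1}(mpolyE q) mulr_sumr (lin_sum Fl) [in RHS](mpolyE q) (lin_sum Fl) mulr_sumr.
  apply: eq_bigr => m' _; by rewrite -scalerAr !(linZ Fl) FXM scalerAr.
exists F; split.
- split=> //; last by rewrite /F -[1]/(1%:MP) mmapC /= scale1r.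
  move=> p q; rewrite {1}(mpolyE p) mulr_suml (lin_sum Fl) [in RHS](mpolyE p) (lin_sum Fl) mulr_suml.
  apply: eq_bigr => m _; by rewrite -scalerAl !(linZ Fl) FXq scalerAl.
- by rewrite /F /xA mmapX mmap1U.
- by rewrite /F /yA mmapX mmap1U.
Qed.
End AlgMpoly.

Section ATens.
Variable k : fieldType.

Lemma lin_mulr (A : algType k) (z : A) : lin (fun x : A => x * z).
Proof. by move=> a x y; rewrite mulrDl scalerAl. Qed.
Lemma lin_mull (A : algType k) (z : A) : lin (fun x : A => z * x).
Proof. by move=> a x y; rewrite mulrDr scalerAr. Qed.

Variables (V W : algType k) (X : atensor V W).
Local Notation T := (atensor_tensor X).

Lemma amul_lin_l w : lin (fun v => amul X v w). Proof. exact: (tmul_lin_l T). Qed.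
Lemma amul_lin_r v : lin (amul X v). Proof. exact: (tmul_lin_r T). Qed.
Lemma amulDl v v' w : amul X (v + v') w = amul X v w + amul X v' w.
Proof. exact: (tmulDl T). Qed.
Lemma amulDr v w w' : amul X v (w + w') = amul X v w + amul X v w'.
Proof. exact: (tmulDr T). Qed.
Lemma amulZl a v w : amul X (a *: v) w = a *: amul X v w.
Proof. exact: (tmulZl T). Qed.
Lemma amulZr a v w : amul X v (a *: w) = a *: amul X v w.
Proof. exact: (tmulZr T). Qed.
Lemma amulNl v w : amul X (- v) w = - amul X v w.
Proof. exact: (tmulNl T). Qed.
Lemma amulNr v w : amul X v (- w) = - amul X v w.
Proof. exact: (tmulNr T). Qed.
Lemma amulBl v v' w : amul X (v - v') w = amul X v w - amul X v' w.
Proof. exact: (tmulBl T). Qed.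
Lemma amulBr v w w' : amul X v (w - w') = amul X v w - amul X v w'.
Proof. exact: (tmulBr T). Qed.
Lemma amul0l w : amul X 0 w = 0. Proof. exact: (tmul0l T). Qed.
Lemma amul0r v : amul X v 0 = 0. Proof. exact: (tmul0r T). Qed.

Lemma tliftAE (U : lmodType k) (b : V -> W -> U) : bilin b ->
  forall v w, tlift X b (amul X v w) = b v w.
Proof. exact: (tliftE T). Qed.

Lemma atensor_ext (U : lmodType k) (l1 l2 : X -> U) : lin l1 -> lin l2 ->
  (forall v w, l1 (amul X v w) = l2 (amul X v w)) -> forall t, l1 t = l2 t.
Proof. move=> H1 H2 H3; exact: (@tensor_ext k V W T U l1 l2 H1 H2 H3). Qed.

Lemma lin_mult (U : algType k) (l : X -> U) (b : V -> W -> U) : lin l ->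
  (forall v w, l (amul X v w) = b v w) ->
  (forall v v' w w', b (v * v') (w * w') = b v w * b v' w') ->
  forall t t', l (t * t') = l t * l t'.
Proof.
move=> Hl Hlb Hm t t'.
pose l1 := fun t => l (t * t'); pose l2 := fun t => l t * l t'.
have := @atensor_ext U l1 l2 (lin_comp (lin_mulr t') Hl) (lin_comp Hl (lin_mulr (l t'))).
apply=> v w; rewrite /l1 /l2 {t}.
pose m1 := fun t' => l (amul X v w * t'); pose m2 := fun t' => l (amul X v w) * l t'.
have := @atensor_ext U m1 m2 (lin_comp (lin_mull _) Hl) (lin_comp Hl (lin_mull _)).
apply=> v' w'; by rewrite /m1 /m2 -amulM !Hlb Hm.
Qed.

Lemma tlift_alg (U : algType k) (b : V -> W -> U) : bilin b ->
  (forall v v' w w', b (v * v') (w * w') = b v w * b v' w') -> b 1 1 = 1 ->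
  alg_map (tlift X b).
Proof.
move=> Hb Hm H1; have Hl := @tlift_lin k V W T U b Hb; split=> //.
- exact: (lin_mult Hl (tliftAE Hb) Hm).
- by rewrite -amul1 tliftAE.
Qed.

End ATens.

Definition Zt (k : fieldType) (B : algType k) := {mpoly B[2]}.
HB.instance Definition _ (k : fieldType) (B : algType k) := GRing.NzRing.on (Zt B).

Section ZtS.
Variables (k : fieldType) (B : algType k).
Definition zscale (c : k) (z : Zt B) : Zt B := (c%:A : B) *: (z : {mpoly B[2]}).
Lemma zscaleA a b v : zscale a (zscale b v) = zscale (a * b) v.
Proof. by rewrite /zscale scalerA mulr_algl scalerA. Qed.
Lemma zscale1 : left_id 1 zscale.
Proof. by move=> v; rewrite /zscale scale1r scale1r. Qed.
Lemma zscaleDr : right_distributive zscale +%R.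
Proof. by move=> a x y; rewrite /zscale scalerDr. Qed.
Lemma zscaleDl v : {morph zscale^~ v: a b / a + b}.
Proof. by move=> a b; rewrite /zscale scalerDl scalerDl. Qed.
End ZtS.

HB.instance Definition _ (k : fieldType) (B : algType k) :=
  GRing.Zmodule_isLmodule.Build k (Zt B) (@zscaleA k B) (@zscale1 k B) (@zscaleDr k B) (@zscaleDl k B).

Section ZtS2.
Variables (k : fieldType) (B : algType k).
Lemma zscaleAl (a : k) (u v : Zt B) : a *: (u * v) = (a *: u) * v.
Proof. by rewrite /GRing.scale /= /zscale scalerAl. Qed.

Lemma coef_comm (c : B) (z : {mpoly B[2]}) : (forall m, c * z@_m = z@_m * c) ->
  c%:MP * z = z * c%:MP.
Proof.
move=> Hc; rewrite (mpolyE z) mulr_sumr mulr_suml; apply: eq_bigr => m _.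
rewrite -!mul_mpolyC -mulrA -(commr_mpolyX m c%:MP) !mulrA; congr (_ * _).
by rewrite -!mpolyCM Hc.
Qed.

Lemma central_comm (c : B) (z : {mpoly B[2]}) : (forall x : B, c * x = x * c) ->
  c%:MP * z = z * c%:MP.
Proof. by move=> Hc; apply: coef_comm => m; rewrite Hc. Qed.

Lemma alg_central (a : k) (x : B) : a%:A * x = x * a%:A.
Proof. by rewrite mulr_algl mulr_algr. Qed.

Lemma zscaleE (a : k) (u : Zt B) : a *: u = (a%:A : B)%:MP * (u : {mpoly B[2]}).
Proof. by rewrite /GRing.scale /= /zscale mul_mpolyC. Qed.

Lemma zscaleAr (a : k) (u v : Zt B) : a *: (u * v) = u * (a *: v).
Proof.
rewrite !zscaleE mulrA (central_comm _ (@alg_central a)) -mulrA //.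
Qed.
End ZtS2.

HB.instance Definition _ (k : fieldType) (B : algType k) :=
  GRing.Lmodule_isLalgebra.Build k (Zt B) (@zscaleAl k B).
HB.instance Definition _ (k : fieldType) (B : algType k) :=
  GRing.Lalgebra_isAlgebra.Build k (Zt B) (@zscaleAr k B).

Check (fun (k : fieldType) (B : algType k) => (Zt B : algType k)).

Section CoLR.
Variable k : fieldType.

Lemma tlift_linb (P V W U : lmodType k) (T : tensor V W) (b : P -> V -> W -> U) :
  (forall p, bilin (b p)) -> (forall v w, lin (fun p => b p v w)) ->
  forall t, lin (fun p => tlift T (b p) t).
Proof.
move=> Hb Hp t a p p'.
have := @tensor_ext k V W T U (fun t => tlift T (b (a *: p + p')) t)
   (fun t => a *: tlift T (b p) t + tlift T (b p') t).
apply.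
- exact: tlift_lin.
- move=> a' x y; rewrite !(linD (tlift_lin T (Hb _))) !(linZ (tlift_lin T (Hb _))).
  rewrite !scalerDr !scalerA [a' * a]mulrC -!addrA; congr (_ + _); by rewrite addrCA.
- by move=> v w; rewrite !tliftE // Hp.
Qed.

Lemma bilin_tmul3_12 (V1 V2 V3 : lmodType k) (T3 : tensor3 V1 V2 V3) w :
  bilin (fun u u' => tmul3 T3 u u' w).
Proof. by split=> ?; [exact: tmul3_lin1 | exact: tmul3_lin2]. Qed.

Lemma bilin_tmul3_23 (V1 V2 V3 : lmodType k) (T3 : tensor3 V1 V2 V3) v :
  bilin (fun u w => tmul3 T3 v u w).
Proof. by split=> ?; [exact: tmul3_lin2 | exact: tmul3_lin3]. Qed.

Variables (V W : lmodType k) (T : tensor V W) (T12 : tensor V V) (T3 : tensor3 V V W).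

Lemma coL_bilin (D : V -> T12) : lin D ->
  bilin (fun v w => tlift T12 (fun u u' => tmul3 T3 u u' w) (D v)).
Proof.
move=> HD; split.
- move=> w; exact: (lin_comp HD (tlift_lin T12 (bilin_tmul3_12 T3 w))).
- move=> v; apply: (@tlift_linb W V V _ T12 (fun w u u' => tmul3 T3 u u' w)).
  + move=> w; exact: bilin_tmul3_12.
  + by move=> ? ?; exact: tmul3_lin3.
Qed.

Lemma coR_bilin (f : W -> T) : lin f ->
  bilin (fun v w => tlift T (fun u w' => tmul3 T3 v u w') (f w)).
Proof.
move=> Hf; split.
- move=> w; apply: (@tlift_linb V V W _ T (fun v u w' => tmul3 T3 v u w')).
  + move=> v; exact: bilin_tmul3_23.
  + by move=> ? ?; exact: tmul3_lin1.
- move=> v; exact: (lin_comp Hf (tlift_lin T (bilin_tmul3_23 T3 v))).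
Qed.

Lemma coL_lin (D : V -> T12) : lin D -> lin (coL T T12 T3 D).
Proof. move=> HD; exact: (tlift_lin T (coL_bilin HD)). Qed.
Lemma coLE (D : V -> T12) : lin D -> forall v w,
  coL T T12 T3 D (tmul T v w) = tlift T12 (fun u u' => tmul3 T3 u u' w) (D v).
Proof. move=> HD v w; exact: (tliftE T (coL_bilin HD)). Qed.
Lemma coR_lin (f : W -> T) : lin f -> lin (coR T T3 f).
Proof. move=> Hf; exact: (tlift_lin T (coR_bilin Hf)). Qed.
Lemma coRE (f : W -> T) : lin f -> forall v w,
  coR T T3 f (tmul T v w) = tlift T (fun u w' => tmul3 T3 v u w') (f w).
Proof. move=> Hf v w; exact: (tliftE T (coR_bilin Hf)). Qed.
End CoLR.

Lemma alg_map_comp (k : fieldType) (R S U : algType k) (f : R -> S) (g : S -> U) :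
  alg_map f -> alg_map g -> alg_map (fun x => g (f x)).
Proof.
case=> Hf Mf f1 [Hg Mg g1]; split; first exact: lin_comp.
- by move=> x y; rewrite Mf Mg.
- by rewrite f1 g1.
Qed.

Section ZJ.
Variables (k : fieldType) (B : algType k).

Definition J (q : Apoly k) : Zt B := map_mpoly (GRing.in_alg B) q.

Lemma J_alg : alg_map J.
Proof.
split.
- move=> a x y; rewrite /J.
  have -> : map_mpoly (GRing.in_alg B) (a *: x + y) =
    map_mpoly (GRing.in_alg B) (a *: x) + map_mpoly (GRing.in_alg B) y by exact: rmorphD.
  by rewrite map_mpolyZ.
- by move=> x y; rewrite /J rmorphM.
- by rewrite /J rmorph1.
Qed.

Lemma Jc (w : B) q : (w%:MP : Zt B) * J q = J q * w%:MP.
Proof.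
apply: (@coef_comm k B) => m; rewrite mcoeff_map_mpoly /=.
by rewrite alg_central.
Qed.

Lemma ZaddE (x y : Zt B) : (x + y : Zt B) = ((x : {mpoly B[2]}) + y : {mpoly B[2]}).
Proof. by []. Qed.

Lemma MPC_lin : lin (fun w : B => (w%:MP : Zt B)).
Proof.
move=> a x y; rewrite mpolyCD zscaleE -mpolyCM; congr (_ + _).
by rewrite mulr_algl.
Qed.
End ZJ.

Section Coassoc.
Variables (k : fieldType) (O : hopf k) (OA : atensor O (Apoly k)) (OOA : tensor3 O O (Apoly k)).
Local Notation B := (hHH O).
Local Notation Z := (Zt (hHH O)).

Definition jf (u v : O) (q : Apoly k) : Z := (amul B u v)%:MP * J B q.

Lemma jf_trilin : trilin jf.
Proof.
have [HJ _ _] := @J_alg k B.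
split.
- move=> v q; apply: (@lin_comp _ _ _ _ (fun u => amul B u v) (fun w => (w%:MP : Z) * J B q)).
    exact: amul_lin_l.
  exact: (lin_comp (@MPC_lin k B) (lin_mulr _)).
- move=> u q; apply: (@lin_comp _ _ _ _ (fun v => amul B u v) (fun w => (w%:MP : Z) * J B q)).
    exact: amul_lin_r.
  exact: (lin_comp (@MPC_lin k B) (lin_mulr _)).
- move=> u v; have := @lin_comp _ _ _ _ (J B) (fun z : Z => ((amul B u v)%:MP : Z) * z) HJ (lin_mull _).
  by [].
Qed.

Definition jm : OOA -> Z := tlift3 OOA jf.
Lemma jm_lin : lin jm. Proof. exact: (tlift3_lin OOA jf_trilin). Qed.
Lemma jmE u v q : jm (tmul3 OOA u v q) = (amul B u v)%:MP * J B q.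
Proof. exact: (tlift3E OOA jf_trilin). Qed.

Definition rho (m : 'X_{1..2}) : B -> OOA := tlift B (fun u v => tmul3 OOA u v 'X_[m]).
Lemma rho_lin m : lin (rho m). Proof. exact: (tlift_lin B (bilin_tmul3_12 OOA _)). Qed.
Lemma rhoE m u v : rho m (amul B u v) = tmul3 OOA u v 'X_[m].
Proof. exact: (tliftE B (bilin_tmul3_12 OOA _)). Qed.

Definition rr (z : Z) : OOA := \sum_(m <- msupp z) rho m (z@_m).

Lemma rrE (z : Z) i : (msize z <= i)%N -> rr z = \sum_(m : 'X_{1..2 < i}) rho m (z@_m).
Proof.
move=> le_pi; set I : subFinType _ := 'X_{1..2 < i}.
rewrite /rr (big_mksub I) ?msupp_uniq //=; first last.
  by move=> x /msize_mdeg_lt /leq_trans; apply.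
rewrite big_rmcond //= => j /memN_msupp_eq0 ->.
exact: (lin0 (rho_lin _)).
Qed.

Lemma rr_lin : lin rr.
Proof.
move=> a x y.
set i := maxn (msize x) (msize y).
have hx : (msize x <= i)%N by rewrite leq_maxl.
have hy : (msize y <= i)%N by rewrite leq_maxr.
have hz : (msize (a *: x + y) <= i)%N.
  apply: leq_trans (msizeD_le _ _) _; rewrite geq_max hy andbT.
  rewrite zscaleE mul_mpolyC; exact: leq_trans (msizeZ_le _ _) hx.
rewrite (rrE hx) (rrE hy) (rrE hz) scaler_sumr -big_split /=; apply: eq_bigr => m _.
rewrite mcoeffD zscaleE mcoeffCM (linD (rho_lin _)) mulr_algl (linZ (rho_lin _)) //.
Qed.

Lemma rr_jm t : rr (jm t) = t.
Proof.
have := @tmul3_uniq k _ _ _ OOA OOA (fun t => rr (jm t)) (fun t => t)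
  (lin_comp jm_lin rr_lin) (@lin_id _ _).
apply=> // u v q; rewrite jmE.
set z : Z := _ * _.
set i := maxn (msize z) (msize q).
have hz : (msize z <= i)%N by rewrite leq_maxl.
have hq : (msize q <= i)%N by rewrite leq_maxr.
rewrite (rrE hz) {1}(mpolywE hq) (lin_sum (tmul3_lin3 OOA u v)).
apply: eq_bigr => m _.
rewrite /z mcoeffCM mcoeff_map_mpoly /= mulr_algr (linZ (rho_lin _)) rhoE.
by rewrite (linZ (tmul3_lin3 OOA u v)).
Qed.

Lemma bilin_amulB_mpC (q : Apoly k) : bilin (fun u u' : O => tmul3 OOA u u' q).
Proof. exact: bilin_tmul3_12. Qed.

Definition theta (q : Apoly k) : B -> OOA := tlift B (fun u u' => tmul3 OOA u u' q).

Lemma jm_theta q t : jm (theta q t) = (t%:MP : Z) * J B q.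
Proof.
have := @tensor_ext k O O B Z (fun t => jm (theta q t)) (fun t => (t%:MP : Z) * J B q).
apply.
- exact: (lin_comp (tlift_lin B (bilin_tmul3_12 OOA q)) jm_lin).
- exact: (lin_comp (@MPC_lin k B) (lin_mulr _)).
- by move=> u v; rewrite /theta (tliftE B (bilin_tmul3_12 OOA q)) jmE.
Qed.

Lemma comul_lin : lin (@comul k O). Proof. by case: (comul_alg O). Qed.

Lemma coL_amul h q : coL OA B OOA (@comul k O) (amul OA h q) = theta q (comul h).
Proof. have := @coLE k O (Apoly k) OA B OOA (@comul k O) comul_lin h q. exact. Qed.

Definition Kf (h : O) (t : OA) : Z := jm (tlift OA (fun u w => tmul3 OOA h u w) t).
Lemma Kf_lin h : lin (Kf h).
Proof. exact: (lin_comp (tlift_lin OA (bilin_tmul3_23 OOA h)) jm_lin). Qed.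
Lemma KfE h u w : Kf h (amul OA u w) = (amul B h u)%:MP * J B w.
Proof. by rewrite /Kf (tliftE OA (bilin_tmul3_23 OOA h)) jmE. Qed.

Lemma coR_amul (f : Apoly k -> OA) (Hf : lin f) h q :
  jm (coR OA OOA f (amul OA h q)) = Kf h (f q).
Proof. by rewrite /Kf (@coRE k O (Apoly k) OA OOA f Hf). Qed.

Lemma Kf_split h t : Kf h t = ((amul B h 1)%:MP : Z) * Kf 1 t.
Proof.
have := @atensor_ext k O (Apoly k) OA Z (Kf h) (fun t => ((amul B h 1)%:MP : Z) * Kf 1 t).
apply; first exact: Kf_lin.
- exact: (lin_comp (Kf_lin 1) (lin_mull _)).
- move=> u w; rewrite !KfE mulrA -mpolyCM -amulM mulr1 mul1r //.
Qed.

Lemma Kf_comm h t : ((amul B h 1)%:MP : Z) * Kf 1 t = Kf 1 t * (amul B h 1)%:MP.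
Proof.
have := @atensor_ext k O (Apoly k) OA Z (fun t => ((amul B h 1)%:MP : Z) * Kf 1 t)
   (fun t => Kf 1 t * (amul B h 1)%:MP).
apply.
- exact: (lin_comp (Kf_lin 1) (lin_mull _)).
- exact: (lin_comp (Kf_lin 1) (lin_mulr _)).
- move=> u w; rewrite !KfE -mulrA -(Jc (amul B h 1)) !mulrA -!mpolyCM -!amulM.
  by rewrite !mulr1 !mul1r.
Qed.

Lemma Kf1_mult t t' : Kf 1 (t * t') = Kf 1 t * Kf 1 t'.
Proof.
apply: (lin_mult (Kf_lin 1) (@KfE 1)) => v v' w w'.
have [_ JM _] := @J_alg k B.
have -> : amul B 1 (v * v') = amul B 1 v * amul B 1 v' by rewrite -amulM mul1r.
rewrite JM mpolyCM -!mulrA; congr (_ * _).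
by rewrite !mulrA Jc.
Qed.

Lemma coassoc_dA (a b c d : O) (dA : Apoly k -> OA) : alg_map dA ->
  dA (xA k) = amul OA a (xA k) + amul OA b (yA k) ->
  dA (yA k) = amul OA c (xA k) + amul OA d (yA k) ->
  comul a = amul B a a + amul B b c -> comul b = amul B a b + amul B b d ->
  comul c = amul B c a + amul B d c -> comul d = amul B c b + amul B d d ->
  forall p, coL OA B OOA (@comul k O) (dA p) = coR OA OOA dA (dA p).
Proof.
move=> HdA Hx Hy Ca Cb Cc Cd.
have [dAl dAM dA1] := HdA.
have [_ CM C1] := comul_alg O.
have [_ JM J1] := @J_alg k B.
pose L := fun t => jm (coL OA B OOA (@comul k O) t).
have Ll : lin L := lin_comp (@coL_lin k O (Apoly k) OA B OOA _ comul_lin) jm_lin.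
have LE h q : L (amul OA h q) = ((comul h)%:MP : Z) * J B q by rewrite /L coL_amul jm_theta.
have Lalg : alg_map L.
  split=> //; last by rewrite -amul1 LE C1 J1 mulr1; apply: mpolyC1.
  apply: (lin_mult Ll LE) => v v' w w'.
  rewrite CM JM mpolyCM -!mulrA; congr (_ * _); by rewrite !mulrA Jc.
pose R := fun t => jm (coR OA OOA dA t).
have Rl : lin R := lin_comp (@coR_lin k O (Apoly k) OA OOA dA dAl) jm_lin.
have RE h q : R (amul OA h q) = Kf h (dA q) by rewrite /R coR_amul.
have Ralg : alg_map R.
  split=> //; last by rewrite -amul1 RE dA1 -amul1 KfE J1 mulr1 amul1; apply: mpolyC1.
  apply: (lin_mult Rl RE) => v v' w w'.
  rewrite Kf_split dAM Kf1_mult -[1 : O]mulr1 amulM mpolyCM !mulr1 (Kf_split v) (Kf_split v').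
  rewrite -!mulrA; congr (_ * _); rewrite !mulrA; congr (_ * _).
  by rewrite -Kf_comm.
have := alg_map_uniq (alg_map_comp HdA Lalg) (alg_map_comp HdA Ralg).
have LD := linD Ll; have RD := linD Rl; have KD := fun h => linD (Kf_lin h).
move=> H p; rewrite -[LHS]rr_jm -[RHS]rr_jm; congr rr; apply: H.
- clearbody L R; rewrite Hx LD !LE RD !RE Hx Hy !KD !KfE Ca Cb !mpolyCD !mulrDl.
  move: (J B (xA k)) (J B (yA k)) (amul B a a) (amul B a b) (amul B b c) (amul B b d) => X Y A1 A2 A3 A4.
  by rewrite addrACA.
- clearbody L R; rewrite Hy LD !LE RD !RE Hx Hy !KD !KfE Cc Cd !mpolyCD !mulrDl.
  move: (J B (xA k)) (J B (yA k)) (amul B c a) (amul B c b) (amul B d c) (amul B d d) => X Y A1 A2 A3 A4.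
  by rewrite addrACA.
Qed.
End Coassoc.

Section Gen.
Variables (k : fieldType) (H : algType k) (X : atensor H (Apoly k)).
Local Notation x := (xA k).
Local Notation y := (yA k).

Lemma expand_uv (a b c d : H) :
  (amul X a x + amul X b y) * (amul X c x + amul X d y) =
  amul X (a * c) (x * x) + amul X (a * d + b * c) (x * y) + amul X (b * d) (y * y).
Proof.
rewrite mulrDl !mulrDr -!amulM [y * x]mulrC amulDl.
move: (amul X _ (x * x)) (amul X (a * d) _) (amul X (b * c) _) (amul X _ (y * y)).
by move=> A1 A2 A3 A4; rewrite !addrA.
Qed.

Definition chi (m : 'X_{1..2}) : X -> H := tlift X (fun h q => q@_m *: h).
Lemma chi_bilin m : bilin (fun (h : H) (q : Apoly k) => q@_m *: h).
Proof.
split.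
- move=> q a h h'; by rewrite scalerDr !scalerA mulrC.
- move=> h a q q'; by rewrite mcoeffD mcoeffZ scalerDl scalerA.
Qed.
Lemma chi_lin m : lin (chi m). Proof. exact: (tlift_lin X (chi_bilin m)). Qed.
Lemma chiE m h q : chi m (amul X h q) = q@_m *: h.
Proof. exact: (tliftE X (chi_bilin m)). Qed.

Definition Rep (n : nat) (t : X) := exists s : seq (H * Apoly k),
  all (fun hp => hp.2 \is n.-homog) s /\ t = \sum_(hp <- s) amul X hp.1 hp.2.

Lemma Rep0 n : Rep n 0. Proof. by exists [::]; rewrite big_nil. Qed.
Lemma RepD n t t' : Rep n t -> Rep n t' -> Rep n (t + t').
Proof.
case=> s [Hs ->] [s' [Hs' ->]]; exists (s ++ s'); rewrite all_cat Hs Hs'.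
by rewrite big_cat.
Qed.
Lemma RepZ n a t : Rep n t -> Rep n (a *: t).
Proof.
case=> s [Hs ->]; exists [seq (a *: hp.1, hp.2) | hp <- s]; split.
  by rewrite all_map.
rewrite big_map scaler_sumr; apply: eq_bigr => hp _; by rewrite amulZl.
Qed.
Lemma RepM i j t t' : Rep i t -> Rep j t' -> Rep (i + j) (t * t').
Proof.
case=> s [Hs ->] [s' [Hs' ->]].
exists [seq (z.1.1 * z.2.1, z.1.2 * z.2.2) | z <- [seq (hp, hq) | hp <- s, hq <- s']]; split.
  rewrite all_map; apply/allP => z /allpairsP [[hp hq] [/= hin hin' ->]] /=.
  apply: dhomogM; [exact: (allP Hs _ hin) | exact: (allP Hs' _ hin')].
rewrite big_map big_allpairs mulr_suml; apply: eq_bigr => hp _.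
rewrite mulr_sumr; apply: eq_bigr => hq _ /=; by rewrite amulM.
Qed.
Lemma Rep1 : Rep 0 1.
Proof. exists [:: (1, 1)]; rewrite /= dhomog1 big_seq1 amul1; split=> //. Qed.
Lemma RepX n t e : Rep n t -> Rep (n * e) (t ^+ e).
Proof.
move=> Ht; elim: e => [|e IH]; first by rewrite muln0 expr0; exact: Rep1.
by rewrite exprS mulnS; apply: RepM.
Qed.

Lemma Rep_sum (I : eqType) (r : seq I) (F : I -> X) n : (forall i, i \in r -> Rep n (F i)) ->
  Rep n (\sum_(i <- r) F i).
Proof.
elim: r => [|i r IH] HF; first by rewrite big_nil; exact: Rep0.
rewrite big_cons; apply: RepD; first by apply: HF; rewrite inE eqxx.
by apply: IH => j hj; apply: HF; rewrite inE hj orbT.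
Qed.

Lemma homog_x : x \is 1.-homog. Proof. by rewrite /xA dhomogX; apply/eqP; exact: mdeg1. Qed.
Lemma homog_y : y \is 1.-homog. Proof. by rewrite /yA dhomogX; apply/eqP; exact: mdeg1. Qed.

Lemma Rep_lin1 (a b : H) : Rep 1 (amul X a x + amul X b y).
Proof.
exists [:: (a, x); (b, y)]; rewrite /= homog_x homog_y; split=> //.
by rewrite big_cons big_seq1.
Qed.

Lemma graded_of (F : Apoly k -> X) : alg_map F -> Rep 1 (F x) -> Rep 1 (F y) ->
  graded_coaction F.
Proof.
move=> HF Hx Hy n p Hp.
suff : Rep n (F p) by [].
rewrite (alg_map_expand HF); apply: Rep_sum => m hm; apply: RepZ.
have <- : (1 * m i0 + 1 * m i1)%N = n.
  by rewrite !mul1n -mdeg2; exact: (dhomog_mf Hp hm).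
exact: (RepM (RepX _ Hx) (RepX _ Hy)).
Qed.

End Gen.
Arguments chi {k H} X m _.
Arguments chi_lin {k H} X m.
Arguments chiE {k H} X m h q.
Arguments Rep {k H} X n t.

Lemma zmod_id6 (V : zmodType) (P1 P2 P3 P4 Q2 Q3 : V) :
  (P1 + P2 + (P3 + P4)) - (P1 + Q2 + (Q3 + P4)) = (P2 - Q2) - (Q3 - P3).
Proof.
have -> : P2 - Q2 - (Q3 - P3) = (P2 - Q2) + (P3 - Q3) by rewrite opprB.
rewrite opprD (opprD P1 Q2) (opprD Q3 P4) addrACA (addrACA P1 P2) (addrACA P3 P4).
by rewrite !subrr add0r addr0.
Qed.

Lemma zmod_swap (V : zmodType) (p q r s : V) : p + q = r + s -> p - r = s - q.
Proof.
move=> h; rewrite -(addrK q p) h [r + s]addrC -!addrA; congr (_ + _).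
by rewrite addrCA subrr addr0.
Qed.

Lemma lin_comb (R : nzRingType) (n1 n2 a b c d x y : R) :
  (n1 * a + n2 * c) * x + (n1 * b + n2 * d) * y = n1 * (a * x + b * y) + n2 * (c * x + d * y).
Proof. by rewrite !mulrDl !mulrDr !mulrA addrACA. Qed.

Lemma antipode_solve (R : nzRingType) (a b c d e Sa Sb Sc Sd : R) :
  a * c = c * a -> b * d = d * b ->
  e * (a * d - c * b) = 1 -> e * (d * a - b * c) = 1 ->
  a * Sa + b * Sc = 1 -> a * Sb + b * Sd = 0 -> c * Sa + d * Sc = 0 -> c * Sb + d * Sd = 1 ->
  [/\ Sa = e * d, Sb = - (e * b), Sc = - (e * c) & Sd = e * a].
Proof.
move=> ac bd D1 D2 R1 R2 R3 R4.
have F1 : e * d * a + - (e * b) * c = 1 by rewrite mulNr -!mulrA -mulrBr.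
have F2 : e * d * b + - (e * b) * d = 0 by rewrite mulNr -!mulrA -mulrBr bd subrr mulr0.
have F3 : - (e * c) * a + e * a * c = 0.
  by rewrite mulNr addrC -!mulrA -mulrBr ac subrr mulr0.
have F4 : - (e * c) * b + e * a * d = 1 by rewrite mulNr addrC -!mulrA -mulrBr.
split.
- have := lin_comb (e * d) (- (e * b)) a b c d Sa Sc.
  by rewrite F1 F2 R1 R3 mul1r mul0r addr0 mulr1 mulr0 addr0.
- have := lin_comb (e * d) (- (e * b)) a b c d Sb Sd.
  by rewrite F1 F2 R2 R4 mul1r mul0r addr0 mulr1 mulr0 add0r.
- have := lin_comb (- (e * c)) (e * a) a b c d Sa Sc.
  by rewrite F3 F4 R1 R3 mul1r mul0r add0r mulr1 mulr0 addr0.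
- have := lin_comb (- (e * c)) (e * a) a b c d Sb Sd.
  by rewrite F3 F4 R2 R4 mul1r mul0r add0r mulr1 mulr0 add0r.
Qed.

Definition Ux : 'X_{1..2} := U_(i0).
Definition Uy : 'X_{1..2} := U_(i1).
Definition mxx : 'X_{1..2} := (Ux + Ux)%MM.
Definition mxy : 'X_{1..2} := (Ux + Uy)%MM.
Definition myy : 'X_{1..2} := (Uy + Uy)%MM.

Section Coefs.
Variable k : fieldType.
Local Notation x := (xA k).
Local Notation y := (yA k).

Lemma xUx : x@_Ux = 1. Proof. by rewrite /xA /Ux mcoeffXU eqxx. Qed.
Lemma xUy : x@_Uy = 0. Proof. by rewrite /xA /Uy mcoeffXU. Qed.
Lemma yUx : y@_Ux = 0. Proof. by rewrite /yA /Ux mcoeffXU. Qed.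
Lemma yUy : y@_Uy = 1. Proof. by rewrite /yA /Uy mcoeffXU eqxx. Qed.

Lemma mnm_ne (m1 m2 : 'X_{1..2}) (i : 'I_2) : m1 i != m2 i -> (m1 == m2) = false.
Proof. by move=> h; apply/negbTE; apply: contra h => /eqP ->. Qed.

Lemma xxE : x * x = 'X_[mxx] :> Apoly k. Proof. by rewrite /mxx mpolyXD. Qed.
Lemma xyE : x * y = 'X_[mxy] :> Apoly k. Proof. by rewrite /mxy mpolyXD. Qed.
Lemma yyE : y * y = 'X_[myy] :> Apoly k. Proof. by rewrite /myy mpolyXD. Qed.

Lemma c_xx_xx : (x * x)@_mxx = 1. Proof. by rewrite xxE mcoeffX eqxx. Qed.
Lemma c_xx_xy : (x * x)@_mxy = 0.
Proof. by rewrite xxE mcoeffX (@mnm_ne _ _ i1) // /mxx /mxy !mnmDE /Ux /Uy !mnm1E. Qed.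
Lemma c_xx_yy : (x * x)@_myy = 0.
Proof. by rewrite xxE mcoeffX (@mnm_ne _ _ i1) // /mxx /myy !mnmDE /Ux /Uy !mnm1E. Qed.
Lemma c_xy_xx : (x * y)@_mxx = 0.
Proof. by rewrite xyE mcoeffX (@mnm_ne _ _ i1) // /mxx /mxy !mnmDE /Ux /Uy !mnm1E. Qed.
Lemma c_xy_xy : (x * y)@_mxy = 1. Proof. by rewrite xyE mcoeffX eqxx. Qed.
Lemma c_xy_yy : (x * y)@_myy = 0.
Proof. by rewrite xyE mcoeffX (@mnm_ne _ _ i1) // /myy /mxy !mnmDE /Ux /Uy !mnm1E. Qed.
Lemma c_yy_xx : (y * y)@_mxx = 0.
Proof. by rewrite yyE mcoeffX (@mnm_ne _ _ i1) // /mxx /myy !mnmDE /Ux /Uy !mnm1E. Qed.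
Lemma c_yy_xy : (y * y)@_mxy = 0.
Proof. by rewrite yyE mcoeffX (@mnm_ne _ _ i1) // /myy /mxy !mnmDE /Ux /Uy !mnm1E. Qed.
Lemma c_yy_yy : (y * y)@_myy = 1. Proof. by rewrite yyE mcoeffX eqxx. Qed.

Lemma homog1_decomp (q : Apoly k) : q \is 1.-homog -> q = q@_Ux *: x + q@_Uy *: y.
Proof.
move=> hq; apply/mpolyP => m; rewrite mcoeffD !mcoeffZ /xA /yA !mcoeffX.
have [/eqP m1|m1] := eqVneq (mdeg m) 1%N.
- case/mdeg1P: m1 => i /eqP ->.
  rewrite /Ux /Uy !eq_mnm1.
  have [->|->] : i = i0 \/ i = i1.
    by case: i => -[|[|//]] hi; [left|right]; apply: val_inj.
  + by rewrite eqxx mulr1 mulr0 addr0.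
  + by rewrite eqxx mulr1 mulr0 add0r.
- rewrite (dhomog_nemf_coeff hq m1).
  have ne i : (U_(i)%MM == m) = false.
    by apply/negbTE; apply: contra m1 => /eqP <-; rewrite mdeg1.
  by rewrite !ne !mulr0n !mulr0 addr0.
Qed.
End Coefs.

Section Extract.
Variables (k : fieldType) (H : algType k) (X : atensor H (Apoly k)).
Local Notation x := (xA k).
Local Notation y := (yA k).

Lemma chi_deg1 m (p q : H) : chi X m (amul X p x + amul X q y) = x@_m *: p + y@_m *: q.
Proof. by rewrite (linD (chi_lin X m)) !chiE. Qed.

Lemma deg1_inj (p q p' q' : H) : amul X p x + amul X q y = amul X p' x + amul X q' y ->
  p = p' /\ q = q'.
Proof.
move=> h; split.
- have := congr1 (chi X Ux) h; by rewrite !chi_deg1 xUx yUx !scale1r !scale0r !addr0.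
- have := congr1 (chi X Uy) h; by rewrite !chi_deg1 xUy yUy !scale1r !scale0r !add0r.
Qed.

Lemma rep1_form (t : X) : Rep X 1 t -> exists p q, t = amul X p x + amul X q y.
Proof.
case=> s [Hs ->].
exists (\sum_(hp <- s) hp.2@_Ux *: hp.1); exists (\sum_(hp <- s) hp.2@_Uy *: hp.1).
rewrite (lin_sum (amul_lin_l X x)) (lin_sum (amul_lin_l X y)) -big_split /=.
apply: eq_big_seq => hp hin.
rewrite {1}(homog1_decomp (allP Hs _ hin)) amulDr !amulZr !amulZl //.
Qed.

Lemma chi_deg2 m (p q r : H) :
  chi X m (amul X p (x * x) + amul X q (x * y) + amul X r (y * y)) =
  (x * x)@_m *: p + (x * y)@_m *: q + (y * y)@_m *: r.
Proof. by rewrite !(linD (chi_lin X m)) !chiE. Qed.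

Lemma deg2_inj (p q r p' q' r' : H) :
  amul X p (x * x) + amul X q (x * y) + amul X r (y * y) =
  amul X p' (x * x) + amul X q' (x * y) + amul X r' (y * y) ->
  [/\ p = p', q = q' & r = r'].
Proof.
move=> h; split.
- have := congr1 (chi X mxx) h.
  by rewrite !chi_deg2 c_xx_xx c_xy_xx c_yy_xx !scale1r !scale0r !addr0.
- have := congr1 (chi X mxy) h.
  by rewrite !chi_deg2 c_xx_xy c_xy_xy c_yy_xy !scale1r !scale0r !addr0 !add0r.
- have := congr1 (chi X myy) h.
  by rewrite !chi_deg2 c_xx_yy c_xy_yy c_yy_yy !scale1r !scale0r !add0r.
Qed.
End Extract.

Lemma lin_scale (k : fieldType) (V : lmodType k) (c : k) : lin (fun v : V => c *: v).
Proof. by move=> a u v; rewrite scalerDr !scalerA mulrC. Qed.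

Section HopfGen.
Variables (k : fieldType) (H : hopf k).
Lemma comul_linH : lin (@comul k H). Proof. by case: (comul_alg H). Qed.
Lemma comulM_H (u v : H) : comul (u * v) = comul u * comul v. Proof. by case: (comul_alg H). Qed.
Lemma comul1_H : comul (1 : H) = 1. Proof. by case: (comul_alg H). Qed.
Lemma counit_lin' : lin (fun h : H => (counit h : k^o)).
Proof. by move=> a u v; rewrite counit_lin. Qed.
Lemma counitB_H (u v : H) : counit (u - v) = counit u - counit v.
Proof. exact: (linB counit_lin'). Qed.
Lemma antipode_linH : lin (@antipode k H). Proof. exact: antipode_lin. Qed.

Lemma bilin_SL : bilin (fun u v : H => antipode u * v).
Proof.
split.
- move=> v; exact: (lin_comp antipode_linH (lin_mulr v)).
- move=> u; exact: lin_mull.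
Qed.
Lemma bilin_SR : bilin (fun u v : H => u * antipode v).
Proof.
split.
- move=> v; exact: lin_mulr.
- move=> u; exact: (lin_comp antipode_linH (lin_mull u)).
Qed.

Lemma antipodeL2 (h p q r s : H) : comul h = amul (hHH H) p q + amul (hHH H) r s ->
  antipode p * q + antipode r * s = (counit h)%:A.
Proof.
move=> Ch; rewrite -antipodeL Ch (linD (tlift_lin _ bilin_SL)).
by rewrite !(tliftAE _ bilin_SL).
Qed.
Lemma antipodeR2 (h p q r s : H) : comul h = amul (hHH H) p q + amul (hHH H) r s ->
  p * antipode q + r * antipode s = (counit h)%:A.
Proof.
move=> Ch; rewrite -antipodeR Ch (linD (tlift_lin _ bilin_SR)).
by rewrite !(tliftAE _ bilin_SR).
Qed.
Lemma antipodeL1 (h p q : H) : comul h = amul (hHH H) p q -> antipode p * q = (counit h)%:A.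
Proof. by move=> Ch; rewrite -antipodeL Ch (tliftAE _ bilin_SL). Qed.
Lemma antipodeR1 (h p q : H) : comul h = amul (hHH H) p q -> p * antipode q = (counit h)%:A.
Proof. by move=> Ch; rewrite -antipodeR Ch (tliftAE _ bilin_SR). Qed.
End HopfGen.

Section Univ.
Variables (k : fieldType) (H : hopf k) (HA : atensor H (Apoly k)) (HHA : tensor3 H H (Apoly k)).
Variable f : Apoly k -> HA.
Hypothesis Hf : comod_alg HHA f.
Hypothesis Hg : graded_coaction f.
Local Notation x := (xA k).
Local Notation y := (yA k).
Local Notation HH := (hHH H).

Definition xif (m : 'X_{1..2}) (u v : H) (q : Apoly k) : HH := q@_m *: amul HH u v.
Lemma xif_trilin m : trilin (xif m).
Proof.
split.
- move=> v q; exact: (lin_comp (amul_lin_l HH v) (lin_scale _)).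
- move=> u q; exact: (lin_comp (amul_lin_r HH u) (lin_scale _)).
- move=> u v a q q'; by rewrite /xif mcoeffD mcoeffZ scalerDl scalerA.
Qed.
Definition xi m : HHA -> HH := tlift3 HHA (xif m).
Lemma xi_lin m : lin (xi m). Proof. exact: (tlift3_lin HHA (xif_trilin m)). Qed.

Lemma flin : lin f. Proof. by case: Hf => -[]. Qed.

Lemma xi_coL m h q : xi m (coL HA HH HHA (@comul k H) (amul HA h q)) = q@_m *: comul h.
Proof.
rewrite (@coLE k H (Apoly k) HA HH HHA _ (@comul_linH k H)).
have := @tensor_ext k H H HH HH
  (fun t => xi m (tlift HH (fun u u' => tmul3 HHA u u' q) t)) (fun t => q@_m *: t).
apply.
- exact: (lin_comp (tlift_lin HH (bilin_tmul3_12 HHA q)) (xi_lin m)).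
- exact: lin_scale.
- move=> u v; rewrite (tliftE HH (bilin_tmul3_12 HHA q)).
  by rewrite /xi (tlift3E HHA (xif_trilin m)).
Qed.

Lemma xi_coR m h q : xi m (coR HA HHA f (amul HA h q)) = amul HH h (chi HA m (f q)).
Proof.
rewrite (@coRE k H (Apoly k) HA HHA _ flin).
have := @atensor_ext k H (Apoly k) HA HH
  (fun t => xi m (tlift HA (fun u w => tmul3 HHA h u w) t)) (fun t => amul HH h (chi HA m t)).
apply.
- exact: (lin_comp (tlift_lin HA (bilin_tmul3_23 HHA h)) (xi_lin m)).
- exact: (lin_comp (chi_lin HA m) (amul_lin_r HH h)).
- move=> u w; rewrite (tliftAE HA (bilin_tmul3_23 HHA h)).
  by rewrite /xi (tlift3E HHA (xif_trilin m)) chiE amulZr.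
Qed.

Lemma bilin_eps : bilin (fun (h : H) (q : Apoly k) => counit h *: q).
Proof.
split.
- move=> q a u v; by rewrite counit_lin scalerDl scalerA.
- move=> h; exact: lin_scale.
Qed.

Lemma univ_rel : exists a1 b1 c1 d1 : H,
  [/\ f x = amul HA a1 x + amul HA b1 y, f y = amul HA c1 x + amul HA d1 y,
      [/\ comul a1 = amul HH a1 a1 + amul HH b1 c1, comul b1 = amul HH a1 b1 + amul HH b1 d1,
          comul c1 = amul HH c1 a1 + amul HH d1 c1 & comul d1 = amul HH c1 b1 + amul HH d1 d1],
      [/\ counit a1 = 1, counit b1 = 0, counit c1 = 0 & counit d1 = 1] &
      [/\ a1 * c1 = c1 * a1, b1 * d1 = d1 * b1 & a1 * d1 + b1 * c1 = c1 * b1 + d1 * a1]].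
Proof.
have [[fl fM f1] fC fE] := Hf.
have [a1 [b1 fx]] := rep1_form (@Hg 1%N x (homog_x k)).
have [c1 [d1 fy]] := rep1_form (@Hg 1%N y (homog_y k)).
exists a1, b1, c1, d1; split=> //.
- have cx m := congr1 (xi m) (fC x).
  have cy m := congr1 (xi m) (fC y).
  have XL := linD (xi_lin _); have CL := linD (@coL_lin k H (Apoly k) HA HH HHA _ (@comul_linH k H)).
  have CR := linD (@coR_lin k H (Apoly k) HA HHA f flin).
  move: (cx Ux) (cx Uy) (cy Ux) (cy Uy).
  rewrite fx fy !CL !CR !XL !xi_coL !xi_coR fx fy !chi_deg1 xUx xUy yUx yUy.
  rewrite !scale1r !scale0r ?addr0 ?add0r.
  by move=> -> -> -> ->.
- move: (fE x) (fE y); rewrite fx fy.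
  have EL := linD (tlift_lin HA bilin_eps); rewrite !EL !(tliftAE HA bilin_eps).
  move=> ex ey.
  have := congr1 (mcoeff Ux) ex; have := congr1 (mcoeff Uy) ex.
  have := congr1 (mcoeff Ux) ey; have := congr1 (mcoeff Uy) ey.
  rewrite !mcoeffD !mcoeffZ xUx xUy yUx yUy !mulr1 !mulr0 ?addr0 ?add0r.
  by move=> -> -> -> ->.
- have := congr1 f (mulrC x y); rewrite !fM fx fy !expand_uv.
  by case/deg2_inj.
Qed.
End Univ.

Section Rel.
Variables (k : fieldType) (H : hopf k) (a b c d : H).
Local Notation HH := (hHH H).
Local Notation S := (@antipode k H).
Hypotheses (Ca : comul a = amul HH a a + amul HH b c) (Cb : comul b = amul HH a b + amul HH b d)
  (Cc : comul c = amul HH c a + amul HH d c) (Cd : comul d = amul HH c b + amul HH d d).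
Hypotheses (Ea : counit a = 1) (Eb : counit b = 0) (Ec : counit c = 0) (Ed : counit d = 1).
Hypotheses (ac : a * c = c * a) (bd : b * d = d * b) (adbc : a * d + b * c = c * b + d * a).

Definition DD := a * d - c * b.
Lemma D_alt : DD = d * a - b * c. Proof. exact: zmod_swap. Qed.

Lemma comul_D : comul DD = amul HH DD DD.
Proof.
rewrite /DD (linB (@comul_linH k H)) !comulM_H Ca Cb Cc Cd.
rewrite !mulrDl !mulrDr -!amulM -ac -bd.
rewrite zmod_id6 -!amulBl -D_alt -/DD -amulBr -/DD //.
Qed.

Lemma counit_D : counit DD = 1.
Proof. by rewrite /DD counitB_H !counitM Ea Eb Ec Ed mul1r mul0r subr0. Qed.

Lemma SD_D : S DD * DD = 1.
Proof. by rewrite (antipodeL1 comul_D) counit_D scale1r. Qed.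
Lemma D_SD : DD * S DD = 1.
Proof. by rewrite (antipodeR1 comul_D) counit_D scale1r. Qed.

Lemma comul_SD : comul (S DD) = amul HH (S DD) (S DD).
Proof.
have P1 : amul HH DD DD * amul HH (S DD) (S DD) = 1 by rewrite -amulM D_SD amul1.
have P2 : comul (S DD) * amul HH DD DD = 1 by rewrite -comul_D -comulM_H SD_D comul1_H.
by rewrite -[LHS]mulr1 -P1 mulrA P2 mul1r.
Qed.

Lemma counit_SD : counit (S DD) = 1.
Proof.
have := congr1 (@counit k H) SD_D.
by rewrite counitM counit_D mulr1 counit1.
Qed.

Lemma onc_rel_H : onc_rel a b c d DD (S DD).
Proof.
have R1 := antipodeR2 Ca; have R2 := antipodeR2 Cb.
have R3 := antipodeR2 Cc; have R4 := antipodeR2 Cd.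
rewrite Ea Eb Ec Ed scale1r scale0r in R1 R2 R3 R4.
have D1 : S DD * (a * d - c * b) = 1 by rewrite -/DD SD_D.
have D2 : S DD * (d * a - b * c) = 1 by rewrite -D_alt SD_D.
have [Sa Sb Sc Sd] := antipode_solve ac bd D1 D2 R1 R2 R3 R4.
rewrite Sa Sb Sc Sd in R1 R2 R3 R4.
split=> //.
- by rewrite -D_alt.
- by rewrite D_SD SD_D.
- split.
    by rewrite !mulrN !mulrA in R1.
  by rewrite !mulrN !mulrA addrC in R4.
- split.
    by apply/eqP; rewrite -subr_eq0 -R2 !mulrN !mulrA addrC.
  by apply/eqP; rewrite -subr_eq0 -R3 !mulrN !mulrA.
Qed.
End Rel.

Section Morph.
Variables (k : fieldType) (O H : hopf k) (g : O -> H).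
Hypothesis Hg : alg_map g.
Local Notation OO := (hHH O).
Local Notation HH := (hHH H).
Local Notation OOO := (hHHH O).
Local Notation SO := (@antipode k O).
Local Notation SH := (@antipode k H).

Lemma glin : lin g. Proof. by case: Hg. Qed.
Lemma gM u v : g (u * v) = g u * g v. Proof. by case: Hg. Qed.
Lemma g1 : g 1 = 1. Proof. by case: Hg. Qed.
Lemma g_alg (c : k) : g c%:A = c%:A. Proof. by rewrite (linZ glin) g1. Qed.

Lemma bilin_gg : bilin (fun v w : O => amul HH (g v) (g w)).
Proof.
split.
- move=> w; exact: (lin_comp glin (amul_lin_l HH (g w))).
- move=> v; exact: (lin_comp glin (amul_lin_r HH (g v))).
Qed.

Lemma tmap_gg_E : tmap OO HH g g = tlift OO (fun v w => amul HH (g v) (g w)).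
Proof. by []. Qed.

Lemma tmap_alg : alg_map (tmap OO HH g g).
Proof.
rewrite tmap_gg_E; apply: tlift_alg; first exact: bilin_gg.
- by move=> v v' w w'; rewrite !gM amulM.
- by rewrite g1 amul1.
Qed.

Hypothesis Hcomul : forall h, comul (g h) = tmap OO HH g g (comul h).
Hypothesis Hcounit : forall h, counit (g h) = counit h.

Definition phif (u v w : O) : H := SH (g u) * g v * g (SO w).
Lemma SHg_lin : lin (fun u => SH (g u)). Proof. exact: (lin_comp glin (@antipode_linH k H)). Qed.
Lemma gSO_lin : lin (fun w => g (SO w)). Proof. exact: (lin_comp (@antipode_linH k O) glin). Qed.

Lemma phif_trilin : trilin phif.
Proof.
split.
- move=> v w; exact: (lin_comp SHg_lin (lin_comp (lin_mulr (g v)) (lin_mulr (g (SO w))))).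
- move=> u w; exact: (lin_comp glin (lin_comp (lin_mull (SH (g u))) (lin_mulr (g (SO w))))).
- move=> u v; exact: (lin_comp gSO_lin (lin_mull _)).
Qed.
Definition Phi : OOO -> H := tlift3 OOO phif.
Lemma Phi_lin : lin Phi. Proof. exact: (tlift3_lin OOO phif_trilin). Qed.
Lemma PhiE u v w : Phi (tmul3 OOO u v w) = SH (g u) * g v * g (SO w).
Proof. exact: (tlift3E OOO phif_trilin). Qed.

Lemma bilin_Psi : bilin (fun u v : O => SH (g u) * g v).
Proof.
split.
- move=> v; exact: (lin_comp SHg_lin (lin_mulr _)).
- move=> u; exact: (lin_comp glin (lin_mull _)).
Qed.
Lemma bilin_Psi' : bilin (fun v w : O => g v * g (SO w)).
Proof.
split.
- move=> w; exact: (lin_comp glin (lin_mulr _)).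
- move=> v; exact: (lin_comp gSO_lin (lin_mull _)).
Qed.

Lemma Psi_comul p : tlift OO (fun u v => SH (g u) * g v) (comul p) = (counit p)%:A.
Proof.
have E : forall t, tlift OO (fun u v => SH (g u) * g v) t =
    tlift HH (fun u v => SH u * v) (tmap OO HH g g t).
  have := @tensor_ext k O O OO H (tlift OO (fun u v => SH (g u) * g v))
    (fun t => tlift HH (fun u v => SH u * v) (tmap OO HH g g t)).
  apply.
  - exact: (tlift_lin OO bilin_Psi).
  - exact: (lin_comp (tlift_lin OO bilin_gg) (tlift_lin HH (@bilin_SL k H))).
  - move=> u v; rewrite (tliftE OO bilin_Psi) tmap_gg_E (tliftE OO bilin_gg).
    by rewrite (tliftAE HH (@bilin_SL k H)).
by rewrite E -Hcomul antipodeL Hcounit.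
Qed.

Lemma Psi'_comul p : tlift OO (fun v w => g v * g (SO w)) (comul p) = (counit p)%:A.
Proof.
have E : forall t, tlift OO (fun v w => g v * g (SO w)) t =
    g (tlift OO (fun v w => v * SO w) t).
  have := @tensor_ext k O O OO H (tlift OO (fun v w => g v * g (SO w)))
    (fun t => g (tlift OO (fun v w => v * SO w) t)).
  apply.
  - exact: (tlift_lin OO bilin_Psi').
  - exact: (lin_comp (tlift_lin OO (@bilin_SR k O)) glin).
  - move=> v w; rewrite (tliftE OO bilin_Psi') (tliftAE OO (@bilin_SR k O)).
    by rewrite gM.
by rewrite E antipodeR g_alg.
Qed.

Lemma bilin_epsL : bilin (fun p w : O => counit p *: w).
Proof.
split.
- move=> w a u v; by rewrite counit_lin scalerDl scalerA.
- move=> p; exact: lin_scale.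
Qed.
Lemma bilin_epsR : bilin (fun u q : O => counit q *: u).
Proof.
split.
- move=> q; exact: lin_scale.
- move=> u a v w; by rewrite counit_lin scalerDl scalerA.
Qed.

Lemma Phi_coL t : Phi (coL OO OO OOO (@comul k O) t) =
  g (SO (tlift OO (fun p w => counit p *: w) t)).
Proof.
have := @tensor_ext k O O OO H (fun t => Phi (coL OO OO OOO (@comul k O) t))
  (fun t => g (SO (tlift OO (fun p w => counit p *: w) t))).
apply.
- exact: (lin_comp (@coL_lin k O O OO OO OOO _ (@comul_linH k O)) Phi_lin).
- exact: (lin_comp (tlift_lin OO bilin_epsL) gSO_lin).
move=> p w; rewrite (@coLE k O O OO OO OOO _ (@comul_linH k O)).
rewrite (tliftAE OO bilin_epsL) (linZ gSO_lin).
have -> : forall t', Phi (tlift OO (fun u u' => tmul3 OOO u u' w) t') =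
    tlift OO (fun u v => SH (g u) * g v) t' * g (SO w).
  have := @tensor_ext k O O OO H (fun t' => Phi (tlift OO (fun u u' => tmul3 OOO u u' w) t'))
    (fun t' => tlift OO (fun u v => SH (g u) * g v) t' * g (SO w)).
  apply.
  - exact: (lin_comp (tlift_lin OO (bilin_tmul3_12 OOO w)) Phi_lin).
  - exact: (lin_comp (tlift_lin OO bilin_Psi) (lin_mulr _)).
  - move=> u v; rewrite (tliftE OO (bilin_tmul3_12 OOO w)) PhiE.
    by rewrite (tliftE OO bilin_Psi).
by rewrite Psi_comul mulr_algl.
Qed.

Lemma Phi_coR t : Phi (coR OO OOO (@comul k O) t) =
  SH (g (tlift OO (fun u q => counit q *: u) t)).
Proof.
have := @tensor_ext k O O OO H (fun t => Phi (coR OO OOO (@comul k O) t))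
  (fun t => SH (g (tlift OO (fun u q => counit q *: u) t))).
apply.
- exact: (lin_comp (@coR_lin k O O OO OOO _ (@comul_linH k O)) Phi_lin).
- exact: (lin_comp (tlift_lin OO bilin_epsR) SHg_lin).
move=> u q; rewrite (@coRE k O O OO OOO _ (@comul_linH k O)).
rewrite (tliftAE OO bilin_epsR) (linZ SHg_lin).
have -> : forall t', Phi (tlift OO (fun v w => tmul3 OOO u v w) t') =
    SH (g u) * tlift OO (fun v w => g v * g (SO w)) t'.
  have := @tensor_ext k O O OO H (fun t' => Phi (tlift OO (fun v w => tmul3 OOO u v w) t'))
    (fun t' => SH (g u) * tlift OO (fun v w => g v * g (SO w)) t').
  apply.
  - exact: (lin_comp (tlift_lin OO (bilin_tmul3_23 OOO u)) Phi_lin).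
  - exact: (lin_comp (tlift_lin OO bilin_Psi') (lin_mull _)).
  - move=> v w; rewrite (tliftE OO (bilin_tmul3_23 OOO u)) PhiE.
    by rewrite (tliftE OO bilin_Psi') mulrA.
by rewrite Psi'_comul mulr_algr.
Qed.

Lemma antipode_morph h : SH (g h) = g (SO h).
Proof.
have := congr1 Phi (comul_coassoc h).
rewrite Phi_coL Phi_coR counitL counitR => ->. done.
Qed.
End Morph.

Lemma zmod_swap' (V : zmodType) (p q r s : V) : p - r = s - q -> p + q = r + s.
Proof.
move=> h; have := congr1 (fun z => z + r + q) h; rewrite /= subrK => ->.
by rewrite addrAC subrK addrC.
Qed.

Lemma onc_rel_map (k : fieldType) (R S : algType k) (phi : R -> S) (a b c d e e' : R) :
  alg_map phi -> onc_rel a b c d e e' ->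
  onc_rel (phi a) (phi b) (phi c) (phi d) (phi e) (phi e').
Proof.
case=> Hl HM H1 [[h1 h2] [h3 h4] [h5 h6] [h7 h8] [h9 h10]].
have pB := linB Hl.
split; split; by rewrite -?HM -?pB ?h1 ?h2 ?h3 ?h4 ?h5 ?h6 ?h7 ?h8 ?h9 ?h10 ?H1.
Qed.

Lemma counit_alg (k : fieldType) (H : hopf k) : alg_map (fun h : H => (counit h : k^o)).
Proof.
split; first exact: counit_lin'.
- move=> u v; exact: (@counitM k H u v).
- exact: (@counit1 k H).
Qed.

Lemma alg_map_id (k : fieldType) (R : algType k) : alg_map (fun x : R => x).
Proof. by split. Qed.

Lemma eps_alg (k : fieldType) (O : hopf k) (OA : atensor O (Apoly k)) :
  alg_map (tlift OA (fun (h : O) (q : Apoly k) => counit h *: q)).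
Proof.
apply: tlift_alg; first exact: (@bilin_eps k O).
- move=> v v' w w'; by rewrite counitM -scalerAl -scalerAr scalerA.
- by rewrite counit1 scale1r.
Qed.

Section TmapId.
Variables (k : fieldType) (O H : hopf k) (OA : atensor O (Apoly k)) (HA : atensor H (Apoly k)).
Variables (g : O -> H) (Hg : alg_map g).
Lemma bilin_gid : bilin (fun (v : O) (w : Apoly k) => amul HA (g v) w).
Proof.
have [gl _ _] := Hg.
split.
- move=> w; exact: (lin_comp gl (amul_lin_l HA w)).
- move=> v; exact: amul_lin_r.
Qed.
Lemma tmap_gid_E : tmap OA HA g id = tlift OA (fun v w => amul HA (g v) w).
Proof. by []. Qed.
Lemma tmap_gid_alg : alg_map (tmap OA HA g id).
Proof.
have [_ gM g1] := Hg.
rewrite tmap_gid_E; apply: tlift_alg; first exact: bilin_gid.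
- by move=> v v' w w'; rewrite gM amulM.
- by rewrite g1 amul1.
Qed.
Lemma tmap_gid_deg1 (p q : O) :
  tmap OA HA g id (amul OA p (xA k) + amul OA q (yA k)) =
  amul HA (g p) (xA k) + amul HA (g q) (yA k).
Proof.
by rewrite tmap_gid_E (linD (tlift_lin OA bilin_gid)) !(tliftAE OA bilin_gid).
Qed.
End TmapId.

Theorem mainTheorem13 (k : fieldType) (O : hopf k) (a b c d e e' : O)
  (Hpres : presents a b c d e e') (Hhopf : onc_hopf_data a b c d e e')
  (OA : atensor O (Apoly k)) (OOA : tensor3 O O (Apoly k)) :
  (exists dA : Apoly k -> OA, alg_map dA /\
     dA (xA k) = amul OA a (xA k) + amul OA b (yA k) /\
     dA (yA k) = amul OA c (xA k) + amul OA d (yA k)) /\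
  (forall dA : Apoly k -> OA, alg_map dA ->
     dA (xA k) = amul OA a (xA k) + amul OA b (yA k) ->
     dA (yA k) = amul OA c (xA k) + amul OA d (yA k) ->
     [/\ comod_alg OOA dA, graded_coaction dA &
       forall (H : hopf k) (HA : atensor H (Apoly k)) (HHA : tensor3 H H (Apoly k))
              (f : Apoly k -> HA),
         comod_alg HHA f -> graded_coaction f ->
         exists g : O -> H,
           [/\ hopf_morph g,
               forall p, tmap OA HA g id (dA p) = f p &
               forall g' : O -> H, hopf_morph g' ->
                 (forall p, tmap OA HA g' id (dA p) = f p) ->
                 forall o, g' o = g o]]).
Proof.
have [Hrel Hpres2] := Hpres.
have Hrel' := Hrel.
case: Hrel' => [[ac bd] [De De'] [ee' e'e] _ _].
have adbc : a * d + b * c = c * b + d * a by apply: zmod_swap'; rewrite De De'.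
case: Hhopf => [[Ca Cb Cc Cd [Ce Ce']] [Ea Ed Ee Ee' [Eb Ec]] _].
split.
  have := @alg_map_exists k OA (amul OA a (xA k) + amul OA b (yA k)) (amul OA c (xA k) + amul OA d (yA k)).
  case.
    by rewrite !expand_uv ac bd adbc.
  move=> dA [HdA Hx Hy]; by exists dA.
move=> dA HdA Hx Hy.
have [dAl dAM dA1] := HdA.
split.
- split=> //.
    exact: (coassoc_dA OOA HdA Hx Hy Ca Cb Cc Cd).
  have := alg_map_uniq (alg_map_comp HdA (eps_alg OA)) (alg_map_id _).
  apply.
  + rewrite Hx (linD (tlift_lin OA (@bilin_eps k O))) !(tliftAE OA (@bilin_eps k O)).
    by rewrite Ea Eb scale1r scale0r addr0.
  + rewrite Hy (linD (tlift_lin OA (@bilin_eps k O))) !(tliftAE OA (@bilin_eps k O)).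
    by rewrite Ec Ed scale1r scale0r add0r.
- apply: (graded_of HdA); [rewrite Hx | rewrite Hy]; exact: Rep_lin1.
move=> H HA HHA f Hf Hgr.
have [a1 [b1 [c1 [d1 [fx fy [Ca1 Cb1 Cc1 Cd1] [Ea1 Eb1 Ec1 Ed1] [ac1 bd1 adbc1]]]]]] :=
  univ_rel Hf Hgr.
have rel1 := onc_rel_H Ca1 Cb1 Cc1 Cd1 Ea1 Eb1 Ec1 Ed1 ac1 bd1 adbc1.
have [[g [Hgalg [ga gb gc gd [ge ge']]]] _] := Hpres2 H _ _ _ _ _ _ rel1.
have tmE u v : tmap (hHH O) (hHH H) g g (amul (hHH O) u v) = amul (hHH H) (g u) (g v).
  by rewrite tmap_gg_E (tliftAE (hHH O) (bilin_gg Hgalg)).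
have tmL : lin (tmap (hHH O) (hHH H) g g) by rewrite tmap_gg_E; exact: (tlift_lin _ (bilin_gg Hgalg)).
have Hcom : forall h, comul (g h) = tmap (hHH O) (hHH H) g g (comul h).
  have A1 := alg_map_comp Hgalg (comul_alg H).
  have A2 := alg_map_comp (comul_alg O) (tmap_alg Hgalg).
  have [_ U] := Hpres2 _ _ _ _ _ _ _ (onc_rel_map A2 Hrel).
  apply: (U _ _ A1 A2); split.
  - by rewrite ga Ca1 Ca (linD tmL) !tmE ga gb gc.
  - by rewrite gb Cb1 Cb (linD tmL) !tmE ga gb gd.
  - by rewrite gc Cc1 Cc (linD tmL) !tmE ga gc gd.
  - by rewrite gd Cd1 Cd (linD tmL) !tmE gb gc gd.
  - split.
      by rewrite ge (comul_D Ca1 Cb1 Cc1 Cd1 ac1 bd1 adbc1) Ce tmE ge.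
    by rewrite ge' (comul_SD Ca1 Cb1 Cc1 Cd1 Ea1 Eb1 Ec1 Ed1 ac1 bd1 adbc1) Ce' tmE ge'.
have Hcou : forall h, counit (g h) = counit h.
  have A1 := alg_map_comp Hgalg (counit_alg H).
  have A2 := counit_alg O.
  have [_ U] := Hpres2 _ _ _ _ _ _ _ (onc_rel_map A2 Hrel).
  apply: (U _ _ A1 A2); split.
  - by rewrite /= ga Ea1 Ea.
  - by rewrite /= gb Eb1 Eb.
  - by rewrite /= gc Ec1 Ec.
  - by rewrite /= gd Ed1 Ed.
  - split.
      by rewrite /= ge (counit_D Ea1 Eb1 Ec1 Ed1) Ee.
    by rewrite /= ge' (counit_SD Ca1 Cb1 Cc1 Cd1 Ea1 Eb1 Ec1 Ed1 ac1 bd1 adbc1) Ee'.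
exists g; split.
- split=> //; exact: antipode_morph Hgalg Hcom Hcou.
- have [Hfalg _ _] := Hf.
  have tD := tmap_gid_deg1 OA HA Hgalg.
  have := alg_map_uniq (alg_map_comp HdA (tmap_gid_alg OA HA Hgalg)) Hfalg.
  apply.
  + by rewrite /= Hx tD ga gb fx.
  + by rewrite Hy tD gc gd fy.
- move=> g' [Hg'alg _ _ _] Hg'f.
  have [_ U] := Hpres2 _ _ _ _ _ _ _ (onc_rel_map Hg'alg Hrel).
  apply: (U _ _ Hg'alg Hgalg).
  have [g'l g'M g'1] := Hg'alg.
  have := Hg'f (xA k); rewrite Hx (tmap_gid_deg1 OA HA Hg'alg) fx => /deg1_inj [g'a g'b].
  have := Hg'f (yA k); rewrite Hy (tmap_gid_deg1 OA HA Hg'alg) fy => /deg1_inj [g'c g'd].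
  have g'e : g' e = g e by rewrite ge -De (linB g'l) !g'M g'a g'b g'c g'd.
  split; [by rewrite g'a ga | by rewrite g'b gb | by rewrite g'c gc | by rewrite g'd gd |].
  split=> //.
  have hD := D_SD Ca1 Cb1 Cc1 Cd1 Ea1 Eb1 Ec1 Ed1 ac1 bd1 adbc1.
  rewrite ge' -[LHS]mulr1 -hD mulrA -ge -g'e -g'M e'e g'1 mul1r //.
Qed.
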